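(* Let $R$ be a commutative ring and $S$ a multiplicative subset of $R$. The following are equivalent: (1) $R$ is a $u$-$S$-semisimple ring; (2) every $R$-module is $u$-$S$-semisimple; (3) every $u$-$S$-exact sequence $0\to A\to B\to C\to0$ is $u$-$S$-split; (4) every short exact sequence of $R$-modules is $u$-$S$-split; (5) $\mathrm{Ext}^1_R(M,N)$ is $u$-$S$-torsion for all $R$-modules $M,N$; (6) every $R$-module is $u$-$S$-projective; (7) every $R$-module is $u$-$S$-injective.
   Context: An $R$-module $T$ is $u$-$S$-torsion if $sT=0$ for some $s\in S$. A sequence $M\xrightarrow{f}N\xrightarrow{g}L$ is $u$-$S$-exact at $N$ if there is $s\in S$ with $s\,\mathrm{Ker}(g)\subseteq\mathrm{Im}(f)$ and $s\,\mathrm{Im}(f)\subseteq\mathrm{Ker}(g)$; a short sequence $0\to A\xrightarrow{f}B\xrightarrow{g}C\to0$ is $u$-$S$-exact if $u$-$S$-exact at each term, and it is $u$-$S$-split if there exist $s\in S$ and an $R$-homomorphism $h:B\to A$ with $h\circ f=s\,\mathrm{Id}_A$. An $R$-module $M$ is $u$-$S$-semisimple if every $u$-$S$-exact sequence $0\to A\to M\to C\to0$ is $u$-$S$-split. $R$ is a $u$-$S$-semisimple ring if every free $R$-module is $u$-$S$-semisimple. An $R$-module $P$ is $u$-$S$-projective if $\mathrm{Ext}^1_R(P,M)$ is $u$-$S$-torsion for all $M$; $E$ is $u$-$S$-injective if $\mathrm{Ext}^1_R(M,E)$ is $u$-$S$-torsion for all $M$. *)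

(* Defs.v *)
From HB Require Import structures.
From mathcomp Require Import all_boot all_order all_algebra.
Set Implicit Arguments. Unset Strict Implicit. Unset Printing Implicit Defensive.
Import GRing.Theory.
Local Open Scope ring_scope.

Definition mult_subset (R : comPzRingType) (S : {pred R}) : Prop :=
  1 \in S /\ (forall a b, a \in S -> b \in S -> a * b \in S).

Section USDefs.
Variables (R : comPzRingType) (S : {pred R}).

Definition uS_exact_at (M N L : lmodType R) (f : M -> N) (g : N -> L) : Prop :=
  exists2 s, s \in S &
    (forall n, g n = 0 -> exists m, f m = s *: n) /\
    (forall m, g (s *: f m) = 0).

(* 0 -> A --f--> B --g--> C -> 0 is u-S-exact: u-S-exact at A, B and C.
   At A: s Ker f <= Im 0 = 0 (the other inclusion is trivial).
   At C: s Ker (C -> 0) = s C <= Im g (the other inclusion is trivial). *)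
Definition uS_exact_short (A B C : lmodType R)
    (f : {linear A -> B}) (g : {linear B -> C}) : Prop :=
  [/\ (exists2 s, s \in S & forall a, f a = 0 -> s *: a = 0),
      uS_exact_at f g &
      (exists2 s, s \in S & forall c, exists b, g b = s *: c)].

Definition uS_split (A B C : lmodType R)
    (f : {linear A -> B}) (g : {linear B -> C}) : Prop :=
  exists2 s, s \in S &
    exists h : {linear B -> A}, forall a, h (f a) = s *: a.

Definition uS_semisimple (M : lmodType R) : Prop :=
  forall (A C : lmodType R) (f : {linear A -> M}) (g : {linear M -> C}),
    uS_exact_short f g -> uS_split f g.

Definition short_exact (A B C : lmodType R)
    (f : {linear A -> B}) (g : {linear B -> C}) : Prop :=
  [/\ injective f,
      (forall b, g b = 0 <-> exists a, f a = b) &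
      (forall c, exists b, g b = c)].

Definition free_module (M : lmodType R) : Prop :=
  exists Bs : {pred M},
    (forall m, exists2 l : seq M, all (mem Bs) l &
       exists c : M -> R, m = \sum_(x <- l) c x *: x) /\
    (forall (l : seq M) (c : M -> R), uniq l -> all (mem Bs) l ->
       \sum_(x <- l) c x *: x = 0 -> forall x, x \in l -> c x = 0).

Definition uS_semisimple_ring : Prop :=
  forall F : lmodType R, free_module F -> uS_semisimple F.

Definition projective (P : lmodType R) : Prop :=
  forall (B C : lmodType R) (g : {linear B -> C}) (phi : {linear P -> C}),
    (forall c, exists b, g b = c) ->
    exists psi : {linear P -> B}, forall x, g (psi x) = phi x.

(* s annihilates Ext^1_R(M, N), computed from a projective presentation
   0 -> K --i--> P --p--> M -> 0:
   Ext^1_R(M,N) = Hom(K,N) / restriction(Hom(P,N)), so s Ext^1 = 0 iff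
   s*phi extends to P for every phi : K -> N.  (Independent of the
   presentation; we require it for every projective presentation.) *)
Definition Ext1_annihilated_by (s : R) (M N : lmodType R) : Prop :=
  forall (K P : lmodType R) (i : {linear K -> P}) (p : {linear P -> M}),
    projective P -> short_exact i p ->
    forall phi : {linear K -> N},
      exists psi : {linear P -> N}, forall k, psi (i k) = s *: phi k.

Definition Ext1_uS_torsion (M N : lmodType R) : Prop :=
  exists2 s, s \in S & Ext1_annihilated_by s M N.

Definition uS_projective (P : lmodType R) : Prop :=
  forall M : lmodType R, Ext1_uS_torsion P M.

Definition uS_injective (E : lmodType R) : Prop :=
  forall M : lmodType R, Ext1_uS_torsion M E.

End USDefs.

(* Main.v *)
From HB Require Import structures.
From mathcomp Require Import all_boot all_order all_algebra.
From mathcomp Require Import finmap monalg ring.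
Require Import Defs.
From Stdlib Require Import ClassicalEpsilon.
Set Implicit Arguments. Unset Strict Implicit. Unset Printing Implicit Defensive.
Import GRing.Theory.
Local Open Scope fset_scope.
Local Open Scope ring_scope.

Section MkLin.
Variables (R : pzRingType) (U V : lmodType R) (f : U -> V).
Hypothesis Hf : forall a x y, f (a *: x + y) = a *: f x + f y.
Definition mklin_fun := f.
Lemma mklin_proof : linear mklin_fun. Proof. move=> a x y; exact: Hf. Qed.
HB.instance Definition _ := GRing.isLinear.Build R U V *:%R mklin_fun mklin_proof.
Definition mklin : {linear U -> V} := mklin_fun.
Lemma mklinE x : mklin x = f x. Proof. by []. Qed.
End MkLin.

Section Comb.
Variables (R : comPzRingType) (U V W : lmodType R).
Lemma lcomp_p (F : {linear U -> V}) (G : {linear V -> W}) a x y :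
  G (F (a *: x + y)) = a *: G (F x) + G (F y).
Proof. by rewrite !linearP. Qed.
Definition lcomp F G := mklin (lcomp_p F G).
Lemma lcompE F G x : lcomp F G x = G (F x). Proof. by []. Qed.
Lemma lcomb_p (c d : R) (F G : {linear U -> V}) a x y :
  c *: F (a *: x + y) + d *: G (a *: x + y) = a *: (c *: F x + d *: G x) + (c *: F y + d *: G y).
Proof.
rewrite [F _]linearP [G _]linearP !scalerDr !scalerA (mulrC c a) (mulrC d a) -!scalerA.
by rewrite addrACA.
Qed.
Definition lcomb c F d G := mklin (lcomb_p c d F G).
Lemma lcombE c F d G x : lcomb c F d G x = c *: F x + d *: G x. Proof. by []. Qed.
Lemma lid_p a (x y : U) : (a *: x + y) = a *: x + y. Proof. by []. Qed.
Definition lid := mklin lid_p.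
Lemma lidE x : lid x = x. Proof. by []. Qed.
End Comb.

Section Ker.
Variables (R : pzRingType) (P M : lmodType R) (p : {linear P -> M}).
Definition kpred : {pred P} := fun x => p x == 0.
Lemma kpred_closed : submod_closed kpred.
Proof.
split; first by rewrite /kpred unfold_in /= linear0.
by move=> a x y; rewrite /kpred !unfold_in /= linearP => /eqP-> /eqP->; rewrite scaler0 addr0.
Qed.
HB.instance Definition _ := GRing.isSubmodClosed.Build R P kpred kpred_closed.
Inductive kerT : predArgType := KerT x of x \in kpred.
Definition kval (k : kerT) := let: KerT x _ := k in x.
HB.instance Definition _ := [isSub of kerT for kval].
HB.instance Definition _ := [Choice of kerT by <:].
HB.instance Definition _ := [SubChoice_isSubZmodule of kerT by <:].
HB.instance Definition _ := [SubZmodule_isSubLmodule of kerT by <:].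
Lemma kval_lin : linear (val : kerT -> P).
Proof. move=> a x y. by rewrite linearP. Qed.
End Ker.

Section FM.
Variables (R : pzRingType) (K : choiceType).
Definition FM := malg K R.
HB.instance Definition _ := GRing.Zmodule.on FM.
Definition fsc c (g : FM) : FM := \sum_(k <- msupp g) << c * g@_k *g k >>.
Lemma fscE c g k : (fsc c g)@_k = c * g@_k.
Proof.
rewrite {2}[g]monalgE !raddf_sum mulr_sumr.
by apply/eq_bigr=> /= i _; rewrite !mcoeffU mulrnAr.
Qed.
Lemma fscA c1 c2 g : fsc c1 (fsc c2 g) = fsc (c1 * c2) g.
Proof. by apply/malgP=> x; rewrite !fscE mulrA. Qed.
Lemma fsc1r D: fsc 1 D = D.
Proof. by apply/malgP=> k; rewrite !fscE mul1r. Qed.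
Lemma fscDr c g1 g2 : fsc c (g1 + g2) = fsc c g1 + fsc c g2.
Proof. by apply/malgP=> k; rewrite !(mcoeffD, fscE) mulrDr. Qed.
Lemma fscDl g c1 c2: fsc (c1 + c2) g = fsc c1 g + fsc c2 g.
Proof. by apply/malgP=> x; rewrite !(mcoeffD, fscE) mulrDl. Qed.
HB.instance Definition _ := GRing.Zmodule_isLmodule.Build R FM
  fscA fsc1r fscDr fscDl.

Lemma FMZ c (g : FM) k : (c *: g)@_k = c * g@_k.
Proof. exact: fscE. Qed.
Lemma FMsuppZ c (g : FM) : msupp (c *: g) `<=` msupp g.
Proof.
apply/fsubsetP=> k; rewrite -!mcoeff_neq0 FMZ.
by apply/contraTneq=> ->; rewrite mulr0 negbK.
Qed.
Definition fe (k : K) : FM := << 1 *g k >>.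
Lemma feE k k' : (fe k)@_k' = (k == k')%:R.
Proof. by rewrite /fe mcoeffU. Qed.
Lemma FM_decomp (g : FM) : g = \sum_(k <- msupp g) g@_k *: fe k.
Proof.
rewrite {1}[g]monalgE; apply: eq_bigr => k _; apply/malgP => k'.
by rewrite FMZ feE mcoeffU mulr_natr.
Qed.

Variable (N : lmodType R) (u : K -> N).
Definition fext (g : FM) : N := \sum_(k <- msupp g) g@_k *: u k.
Lemma fextw (g : FM) (D : {fset K}) : msupp g `<=` D ->
  fext g = \sum_(k <- D) g@_k *: u k.
Proof.
move=> sub; apply: big_fset_incl => // k _ kn.
by rewrite mcoeff_outdom // scale0r.
Qed.
Lemma fext_lin : forall a x y, fext (a *: x + y) = a *: fext x + fext y.
Proof.
move=> a x y.
have s1 : msupp x `<=` msupp x `|` msupp y by apply: fsubsetUl.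
have s2 : msupp y `<=` msupp x `|` msupp y by apply: fsubsetUr.
have s3 : msupp (a *: x + y) `<=` msupp x `|` msupp y.
  apply: fsubset_trans (msuppD_le _ _) _.
  by apply: fsetSU; apply: FMsuppZ.
rewrite (fextw s3) (fextw s1) (fextw s2) scaler_sumr -big_split /=.
by apply: eq_bigr => k _; rewrite mcoeffD FMZ scalerDl scalerA.
Qed.
Lemma fext_fe k : fext (fe k) = u k.
Proof. by rewrite (fextw msuppU_le) big_seq_fset1 feE eqxx scale1r. Qed.
End FM.

Definition fextL (R : pzRingType) (K : choiceType) (N : lmodType R) (u : K -> N)
  : {linear FM R K -> N} := mklin (@fext_lin R K N u).
Lemma fextLE (R : pzRingType) (K : choiceType) (N : lmodType R) (u : K -> N) x :
  fextL u x = fext u x.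
Proof. by []. Qed.

Lemma FM_eq (R : pzRingType) (K : choiceType) (N : lmodType R) (F G : {linear FM R K -> N}) :
  (forall k, F (fe R k) = G (fe R k)) -> forall x, F x = G x.
Proof.
move=> H x; rewrite (FM_decomp x) !linear_sum; apply: eq_bigr => k _.
by rewrite !linearZ /= H.
Qed.

Lemma FM_eqf (R : pzRingType) (K : choiceType) (N : lmodType R) (F G : FM R K -> N) :
  (forall a x y, F (a *: x + y) = a *: F x + F y) ->
  (forall a x y, G (a *: x + y) = a *: G x + G y) ->
  (forall k, F (fe R k) = G (fe R k)) -> forall x, F x = G x.
Proof. by move=> HF HG H x; exact: (@FM_eq _ _ _ (mklin HF) (mklin HG) H x). Qed.

Section Main.
Variable R : comPzRingType.

Lemma FM_proj (K : choiceType) : projective (FM R K).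
Proof.
move=> B C g phi gs.
have ex k : exists b, g b == phi (fe R k).
  by case: (gs (phi (fe R k))) => b <-; exists b.
exists (fextL (fun k => xchoose (ex k))).
apply: (@FM_eqf _ _ _ (fun x => g (fextL (fun k => xchoose (ex k)) x)) phi).
- by move=> a x y; rewrite !linearP.
- by move=> a x y; rewrite !linearP.
- by move=> k; rewrite fextLE fext_fe; apply/eqP/(xchooseP (ex k)).
Qed.

Definition pi (M : lmodType R) : {linear FM R M -> M} := fextL (fun m : M => m).
Definition kinc (M : lmodType R) : {linear kerT (pi M) -> FM R M} := mklin (@kval_lin _ _ _ (pi M)).
Arguments kinc {M}.

Lemma pi_kinc (M : lmodType R) k : pi M (kinc k) = 0.
Proof. by case: k => x hx; apply/eqP; exact: hx. Qed.

Lemma pres_exact (M : lmodType R) : short_exact (kinc (M:=M)) (pi M).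
Proof.
split.
- by move=> x y /= /val_inj.
- move=> b; split.
  + move=> hb; have kb : b \in kpred (pi M) by rewrite unfold_in /kpred hb.
    by exists (KerT kb).
  + by case=> a <-; apply: pi_kinc.
- by move=> c; exists (fe R c); rewrite fextLE fext_fe.
Qed.

Lemma spre (X A B : lmodType R) (f : {linear A -> B}) (y : {linear X -> B}) (s1 : R) :
  (forall a, f a = 0 -> s1 *: a = 0) -> (forall x, exists a, f a = y x) ->
  exists q : {linear X -> A}, forall x, f (q x) = s1 *: y x.
Proof.
move=> H1 ex.
have ex' x : exists a, f a == y x by case: (ex x) => a <-; exists a.
pose c x := xchoose (ex' x).
have cE x : f (c x) = y x by apply/eqP/(xchooseP (ex' x)).
have lin a x x' : s1 *: c (a *: x + x') = a *: (s1 *: c x) + s1 *: c x'.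
  apply/eqP; rewrite scalerA mulrC -scalerA -scalerDr -subr_eq0 -scalerBr; apply/eqP.
  by apply: H1; rewrite linearB linearP /= !cE linearP subrr.
exists (mklin lin) => x; by rewrite mklinE linearZ /= cE.
Qed.

Section Desc.
Variables (M V : lmodType R) (th : {linear FM R M -> V}).
Hypothesis th0 : forall k, th (kinc (M:=M) k) = 0.
Definition dsc (m : M) := th (fe R m).
Lemma dsc_lin a m m' : dsc (a *: m + m') = a *: dsc m + dsc m'.
Proof.
rewrite /dsc -linearP; apply/eqP; rewrite -subr_eq0 -linearB.
have kin : (fe R (a *: m + m') - (a *: fe R m + fe R m')) \in kpred (pi M).
  rewrite unfold_in; apply/eqP.
  by rewrite linearB linearP !fextLE !fext_fe subrr.
by have := th0 (KerT kin) => /= ->.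
Qed.
Lemma dsc_pi x : dsc (pi M x) = th x.
Proof.
apply: (@FM_eqf _ _ _ (fun x => dsc (pi M x)) th).
- by move=> a y z; rewrite linearP dsc_lin.
- by move=> a y z; rewrite linearP.
- by move=> k; rewrite fextLE fext_fe.
Qed.
Definition dscL : {linear M -> V} := mklin dsc_lin.
End Desc.

Variable S : {pred R}.
Hypothesis HS : mult_subset S.

Lemma splitA (M : lmodType R) (s : R) (h : {linear FM R M -> kerT (pi M)}) :
  (forall k, h (kinc k) = s *: k) -> forall N, Ext1_annihilated_by s M N.
Proof.
move=> hs N K' P' i' p' projP' [i'inj i'ker p'surj] phi.
have [lam Hlam] := @FM_proj M _ _ p' (pi M) p'surj.
have thl a x y : lam (s *: (a *: x + y) - kinc (h (a *: x + y)))
   = a *: lam (s *: x - kinc (h x)) + lam (s *: y - kinc (h y)).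
  rewrite -linearP; congr (lam _).
  by rewrite !linearP /= !scalerA mulrC addrACA.
pose th := mklin thl.
have th0 k : th (kinc k) = 0.
  by rewrite mklinE hs [kinc (_ *: _)]linearZ_LR subrr linear0.
pose sg := dscL th0.
have psg m : p' (sg m) = s *: m.
  by rewrite mklinE /dsc mklinE Hlam linearB linearZ /= pi_kinc subr0 fextLE fext_fe.
have yl a x y : s *: (a *: x + y) - sg (p' (a *: x + y))
    = a *: (s *: x - sg (p' x)) + (s *: y - sg (p' y)).
  by rewrite !linearP /= !scalerA mulrC addrACA.
have ex x : exists k, i' k = mklin yl x.
  by apply/i'ker; rewrite mklinE linearB linearZ_LR psg subrr.
have inj0 a : i' a = 0 -> 1 *: a = 0.
  by move=> ha; rewrite scale1r; apply: i'inj; rewrite ha linear0.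
have [q Hq] := spre inj0 ex.
have ql a x y : phi (q (a *: x + y)) = a *: phi (q x) + phi (q y).
  by rewrite !linearP.
exists (mklin ql) => k; rewrite mklinE.
have -> : q (i' k) = s *: k.
  apply: i'inj; rewrite Hq scale1r mklinE.
  have -> : p' (i' k) = 0 by apply/i'ker; exists k.
  by rewrite linear0 subr0 linearZ_LR.
by rewrite linearZ_LR.
Qed.

Lemma inS_mul a b : a \in S -> b \in S -> a * b \in S.
Proof. by case: HS => _; apply. Qed.

Lemma extB (A B C : lmodType R) (f : {linear A -> B}) (g : {linear B -> C}) :
  Ext1_uS_torsion S C A -> uS_exact_short S f g -> uS_split S f g.
Proof.
case=> s Hs Hext [[s1 Hs1 H1] [s2 Hs2 [H2a H2b]] [s3 Hs3 H3]].
have ex c : exists b, g b == s3 *: c by case: (H3 c) => b <-; exists b.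
pose ps := fextL (fun c => xchoose (ex c)).
have gps x : g (ps x) = s3 *: pi C x.
  apply: (@FM_eqf _ _ _ (fun x => g (ps x)) (fun x => s3 *: pi C x)).
  - by move=> a y z; rewrite !linearP.
  - by move=> a y z; rewrite linearP scalerDr !scalerA mulrC.
  - by move=> k; rewrite fextLE fext_fe fextLE fext_fe; apply/eqP/(xchooseP (ex k)).
pose y1 := lcomb s2 (lcomp kinc ps) 0 (lcomp kinc ps).
have ex1 k : exists a, f a = y1 k.
  have [|m Hm] := H2a (ps (kinc k)); first by rewrite gps pi_kinc scaler0.
  by exists m; rewrite lcombE scale0r addr0 Hm.
have [phi Hphi] := spre H1 ex1.
have [psi Hpsi] := Hext _ _ _ _ (@FM_proj C) (pres_exact C) phi.
pose t0 := s * s1 * s2.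
pose th := lcomb (s2 * t0) ps (- s2) (lcomp psi f).
have th0 k : th (kinc k) = 0.
  rewrite lcombE lcompE Hpsi linearZ_LR Hphi lcombE scale0r addr0 lcompE.
  rewrite !scalerA -scalerDl.
  have -> : s2 * t0 + - s2 * s * (s1 * s2) = 0 by rewrite /t0; ring.
  by rewrite scale0r.
pose tau := dscL th0.
pose t := s2 * t0 * s3.
have gtau c : g (tau c) = t *: c.
  rewrite mklinE /dsc lcombE lcompE linearD scaleNr linearN H2b oppr0 addr0.
  by rewrite linearZ_LR gps fextLE fext_fe scalerA.
pose y2 := lcomb (s2 * t) (@lid R B) (- s2) (lcomp g tau).
have ex2 b : exists a, f a = y2 b.
  have [|m Hm] := H2a (t *: b - tau (g b)).
    by rewrite linearB linearZ_LR gtau subrr.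
  by exists m; rewrite Hm lcombE lidE lcompE scalerBr scalerA scaleNr.
have [hq Hhq] := spre H1 ex2.
exists (s1 * s1 * s2 * t).
  by rewrite !inS_mul.
exists (lcomb s1 hq 0 hq) => a0; rewrite lcombE scale0r addr0.
have e1 : f (hq (f a0)) = f ((s1 * s2 * t) *: a0).
  rewrite Hhq lcombE lidE lcompE.
  have -> : (- s2) *: tau (g (f a0)) = 0.
    by rewrite scaleNr -linearZ_LR -linearZ_LR H2b linear0 oppr0.
  by rewrite addr0 [RHS]linearZ_LR !scalerA mulrA.
have := H1 (hq (f a0) - (s1 * s2 * t) *: a0).
rewrite linearB e1 subrr => /(_ erefl) /eqP; rewrite scalerBr subr_eq0 => /eqP ->.
by rewrite !scalerA !mulrA.
Qed.

Lemma se_uS (A B C : lmodType R) (f : {linear A -> B}) (g : {linear B -> C}) :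
  short_exact f g -> uS_exact_short S f g.
Proof.
have S1 : 1 \in S by case: HS.
case=> finj gker gsurj; split.
- by exists (1 : R) => // a fa; rewrite scale1r; apply: finj; rewrite fa linear0.
- exists (1 : R) => //; split.
  + by move=> n /gker [m <-]; exists m; rewrite scale1r.
  + by move=> m; rewrite scale1r; apply/gker; exists m.
- by exists (1 : R) => // c; rewrite scale1r; exact: gsurj.
Qed.

Lemma FM_free (K : choiceType) : free_module (FM R K).
Proof.
have [z|nz] := eqVneq (1 : R) 0.
  have allz (V : lmodType R) (v : V) : v = 0 by rewrite -(scale1r v) z scale0r.
  have allzR (r : R) : r = 0 by rewrite -(mulr1 r) z mulr0.
  exists (fun _ => true); split.
  + move=> m; exists [::] => //; exists (fun _ => 0); by rewrite big_nil; apply: allz.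
  + by move=> l c _ _ _ x _; apply: allzR.
have feinj : injective (fe R (K:=K)).
  move=> k k' /(congr1 (mcoeff k)); rewrite !feE eqxx.
  by case: eqP => // _ /eqP; rewrite mulr1n mulr0n (negbTE nz).
pose isb (y : FM R K) : bool :=
  if excluded_middle_informative (exists k, y = fe R k) then true else false.
have isbP y : reflect (exists k, y = fe R k) (isb y).
  by rewrite /isb; case: excluded_middle_informative => H; constructor.
exists isb; split.
- move=> m; exists [seq fe R k | k <- msupp m].
    by apply/allP => y /mapP [k _ ->]; apply/isbP; exists k.
  exists (fun y => \sum_(k <- msupp m | y == fe R k) m@_k).
  rewrite big_map {1}(FM_decomp m); apply: eq_big_seq => k kin; congr (_ *: _).
  rewrite (eq_bigl (fun k' => k' == k)); last by move=> k'; rewrite (inj_eq feinj) eq_sym.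
  rewrite big_mkcond (bigD1_seq k) ?fset_uniq //= eqxx big1_seq ?addr0 //.
  by move=> k' /andP [/negbTE -> _].
- move=> l c ul al hsum x xl.
  have [k xk] := isbP x (allP al x xl).
  have := congr1 (mcoeff k) hsum.
  rewrite mcoeff0 raddf_sum (bigD1_seq x) //= FMZ xk feE eqxx mulr1 -xk.
  rewrite big1_seq ?addr0 // => y /andP [yx yl].
  have [k' yk'] := isbP y (allP al y yl).
  rewrite FMZ yk' feE; case: eqP => [ekk|_]; last by rewrite mulr0.
  by move: yx; rewrite yk' xk ekk eqxx.
Qed.
End Main.

Theorem theorem3p5 (R : comPzRingType) (S : {pred R}) :
  mult_subset S ->
  [<-> uS_semisimple_ring S;
       forall M : lmodType R, uS_semisimple S M;
       forall (A B C : lmodType R) (f : {linear A -> B}) (g : {linear B -> C}),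
         uS_exact_short S f g -> uS_split S f g;
       forall (A B C : lmodType R) (f : {linear A -> B}) (g : {linear B -> C}),
         short_exact f g -> uS_split S f g;
       forall M N : lmodType R, Ext1_uS_torsion S M N;
       forall P : lmodType R, uS_projective S P;
       forall E : lmodType R, uS_injective S E].
Proof.
move=> HS; tfae.
- move=> H1 M A C f g ex.
  have H5 (M' N : lmodType R) : Ext1_uS_torsion S M' N.
    have [s Hs [h Hh]] := H1 (FM R M') (FM_free R M') _ _ (@kinc R M') (pi M')
      (se_uS HS (pres_exact M')).
    by exists s => //; exact: splitA Hh N.
  exact: (@extB R S HS _ _ _ f g (H5 C A) ex).
- by move=> H2 A B C f g; apply: H2.
- by move=> H3 A B C f g se; apply: H3; apply: se_uS.
- move=> H4 M N; have [s Hs [h Hh]] := H4 _ _ _ (@kinc R M) (pi M) (pres_exact M).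
  by exists s => //; exact: splitA Hh N.
- by move=> H5 P M; exact: H5.
- by move=> H6 E M; exact: H6.
- by move=> H7 F _ A C f g ex; exact: (@extB R S HS _ _ _ f g (H7 A C) ex).
Qed.
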